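(* A category $S$ is conical if and only if its universal monoid $\mathrm{U_{mon}}(S)$ is conical.
   Context: Categories are arrow-only: a set $S$ with a partial associative multiplication, set of identities $\mathrm{Id}\,S$, and each $x$ has source and target identities. $S$ is conical if, whenever $xy$ is defined and belongs to $\mathrm{Id}\,S$, then $x\in\mathrm{Id}\,S$ (equivalently $y\in\mathrm{Id}\,S$); for a monoid this means $xy=1$ implies $x=y=1$. $\mathrm{U_{mon}}(S)$ is the monoid presented by generators $\varepsilon_S(x)$ ($x\in S$) and relations $\varepsilon_S(e)=1$ ($e\in\mathrm{Id}\,S$), $\varepsilon_S(x)\varepsilon_S(y)=\varepsilon_S(xy)$ whenever $xy$ is defined. *)

(* Defs.v *)
From Stdlib Require Import List.
Import ListNotations.
Set Implicit Arguments.

(* Arrow-only categories: a set S with a partial associative multiplication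
   (mul x y = Some z means "xy is defined and equals z"), a set of identities
   Id S, and source / target maps d, r.  Convention: xy is defined iff
   d x = r y (composition written right to left). *)
Record Category (S : Type) := {
  mul : S -> S -> option S;
  isId : S -> Prop;
  dom : S -> S;
  cod : S -> S;
  dom_id : forall x, isId (dom x);
  cod_id : forall x, isId (cod x);
  id_dom : forall e, isId e -> dom e = e;
  id_cod : forall e, isId e -> cod e = e;
  mul_defined : forall x y, (exists z, mul x y = Some z) <-> dom x = cod y;
  mul_dom : forall x y z, mul x y = Some z -> dom z = dom y;
  mul_cod : forall x y z, mul x y = Some z -> cod z = cod x;
  mul_dom_r : forall x, mul x (dom x) = Some x;
  mul_cod_l : forall x, mul (cod x) x = Some x;
  mul_assoc : forall x y z xy yz,
      mul x y = Some xy -> mul y z = Some yz ->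
      exists w, mul xy z = Some w /\ mul x yz = Some w
}.

Definition conical (S : Type) (C : Category S) : Prop :=
  forall x y z, mul C x y = Some z -> isId C z -> isId C x /\ isId C y.

(* The universal monoid U_mon(S), presented by generators eps(x), x in S, and
   relations eps(e) = 1 (e in Id S), eps(x) eps(y) = eps(xy) whenever xy is
   defined.  Concretely: the free monoid on S (words = lists, product = ++,
   unit = [] , eps x = [x]) modulo the congruence generated by the relations. *)
Inductive umon_eq (S : Type) (C : Category S) : list S -> list S -> Prop :=
  | ue_id : forall e, isId C e -> umon_eq C [e] []
  | ue_mul : forall x y z, mul C x y = Some z -> umon_eq C [x; y] [z]
  | ue_refl : forall u, umon_eq C u u
  | ue_sym : forall u v, umon_eq C u v -> umon_eq C v u
  | ue_trans : forall u v w, umon_eq C u v -> umon_eq C v w -> umon_eq C u w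
  | ue_app : forall u u' v v', umon_eq C u u' -> umon_eq C v v' ->
                               umon_eq C (u ++ v) (u' ++ v').

Definition Umon_conical (S : Type) (C : Category S) : Prop :=
  forall u v : list S, umon_eq C (u ++ v) [] -> umon_eq C u [] /\ umon_eq C v [].

(* Main.v *)
Require Import Defs.
From Stdlib Require Import List ClassicalEpsilon.
Import ListNotations.

Section S.
Variable (S : Type) (C : Category S).

Lemma mul_id_r x e w : isId C e -> mul C x e = Some w -> w = x.
Proof.
  intros He H.
  assert (Hd : dom C x = cod C e) by (apply (mul_defined C); eauto).
  rewrite (id_cod C e He) in Hd. subst e.
  rewrite (mul_dom_r C x) in H. congruence.
Qed.

Lemma mul_id_l e x w : isId C e -> mul C e x = Some w -> w = x.
Proof.
  intros He H.
  assert (Hd : dom C e = cod C x) by (apply (mul_defined C); eauto).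
  rewrite (id_dom C e He) in Hd. subst e.
  rewrite (mul_cod_l C x) in H. congruence.
Qed.

Definition isIdb (s : S) : {isId C s} + {~ isId C s} := excluded_middle_informative _.

Definition ins (s : S) (w : list S) : list S :=
  if isIdb s then w else
  match w with
  | [] => [s]
  | t :: w' => match mul C s t with
               | Some st => if isIdb st then w' else st :: w'
               | None => s :: w
               end
  end.

Fixpoint reduced (w : list S) : Prop :=
  match w with
  | [] => True
  | t :: w' => ~ isId C t /\ reduced w' /\
      match w' with [] => True | t' :: _ => mul C t t' = None end
  end.

Lemma none_of_dom a b : dom C a = dom C b -> forall c, mul C b c = None -> mul C a c = None.
Proof.
  intros Hab c Hc. destruct (mul C a c) eqn:E; auto.
  assert (dom C a = cod C c) by (apply (mul_defined C); eauto).
  assert (exists z, mul C b c = Some z) as [z Hz] by (apply (mul_defined C); congruence).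
  congruence.
Qed.

Lemma ins_reduced s w : reduced w -> reduced (ins s w).
Proof.
  intros Hw. unfold ins. destruct (isIdb s) as [Hs|Hs]; auto.
  destruct w as [|t w']; simpl; auto.
  destruct (mul C s t) as [st|] eqn:E.
  - destruct Hw as [Ht [Hw' Hm]].
    destruct (isIdb st); auto. simpl. repeat split; auto.
    destruct w' as [|t' w'']; auto.
    apply (none_of_dom st t); auto. eapply mul_dom; eauto.
  - destruct Hw as [Ht [Hw2 Hm]]. simpl. repeat split; auto.
Qed.

Lemma key x y z w : mul C x y = Some z -> reduced w -> ins x (ins y w) = ins z w.
Proof.
  intros Hxy Hw.
  destruct (isIdb y) as [Hy|Hy].
  { assert (z = x) by (eapply mul_id_r; eauto). subst z.
    unfold ins at 2. destruct (isIdb y); [|contradiction]. reflexivity. }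
  destruct (isIdb x) as [Hx|Hx].
  { assert (z = y) by (eapply mul_id_l; eauto). subst z.
    unfold ins at 1. destruct (isIdb x); [|contradiction]. reflexivity. }
  destruct w as [|t w'].
  - unfold ins. destruct (isIdb y); [contradiction|]. destruct (isIdb x); [contradiction|].
    rewrite Hxy. destruct (isIdb z); auto.
  - destruct Hw as [Ht [Hw' Hm]].
    unfold ins at 2. destruct (isIdb y); [contradiction|].
    destruct (mul C y t) as [yt|] eqn:Eyt.
    + destruct (isIdb yt) as [Hyt|Hyt].
      * destruct (@mul_assoc _ C x y t z yt Hxy Eyt) as [v [Hv1 Hv2]].
        assert (v = x) by (eapply mul_id_r; eauto). subst v.
        assert (Hnx : forall c, mul C t c = None -> mul C x c = None).
        { apply none_of_dom.
          assert (dom C x = cod C y) by (apply (mul_defined C); eauto).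
          assert (dom C t = dom C yt) by (symmetry; eapply mul_dom; eauto).
          assert (cod C y = cod C yt) by (symmetry; eapply mul_cod; eauto).
          rewrite (id_dom C yt Hyt) in *. rewrite (id_cod C yt Hyt) in *. congruence. }
        assert (Hins : ins x w' = x :: w').
        { unfold ins. destruct (isIdb x); [contradiction|].
          destruct w' as [|t' w'']; auto. rewrite (Hnx t' Hm). reflexivity. }
        rewrite Hins. unfold ins. destruct (isIdb z) as [Hz|Hz].
        -- assert (x = t) by (eapply mul_id_l; eauto). subst. reflexivity.
        -- rewrite Hv1. destruct (isIdb x); [contradiction|]. reflexivity.
      * destruct (@mul_assoc _ C x y t z yt Hxy Eyt) as [v [Hv1 Hv2]].
        unfold ins. destruct (isIdb x); [contradiction|]. rewrite Hv2.
        destruct (isIdb z) as [Hz|Hz].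
        -- assert (v = t) by (eapply mul_id_l; eauto). subst v.
           destruct (isIdb t); [contradiction|]. reflexivity.
        -- rewrite Hv1. reflexivity.
    + unfold ins. destruct (isIdb x); [contradiction|]. rewrite Hxy.
      destruct (isIdb z) as [Hz|Hz]; auto.
      rewrite (none_of_dom z y (@mul_dom _ C x y z Hxy) t Eyt). reflexivity.
Qed.

Definition act (u w : list S) := fold_right ins w u.

Lemma act_app u v w : act (u ++ v) w = act u (act v w).
Proof. unfold act. apply fold_right_app. Qed.

Lemma act_reduced u w : reduced w -> reduced (act u w).
Proof. induction u; simpl; auto. intros. apply ins_reduced; auto. Qed.

Lemma act_eq u v : umon_eq C u v -> forall w, reduced w -> act u w = act v w.
Proof.
  induction 1; intros w0 Hw; simpl.
  - unfold ins. destruct (isIdb e); [reflexivity|contradiction].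
  - apply key; auto.
  - reflexivity.
  - symmetry; auto.
  - rewrite IHumon_eq1; auto.
  - rewrite !act_app. rewrite IHumon_eq2; auto. apply IHumon_eq1.
    apply act_reduced; auto.
Qed.

Lemma all_id_eq u : Forall (isId C) u -> umon_eq C u [].
Proof.
  induction 1. apply ue_refl.
  change (x :: l) with ([x] ++ l). change (@nil S) with ((@nil S) ++ []).
  apply ue_app; auto. apply ue_id; auto.
Qed.

Lemma inv_id (Hc : conical C) u v : umon_eq C u v -> (Forall (isId C) u <-> Forall (isId C) v).
Proof.
  induction 1.
  - split; auto.
  - split; intro Hf.
    + inversion Hf; subst. inversion H3; subst.
      assert (z = x) by (eapply mul_id_r; eauto). subst; auto.
    + inversion Hf; subst. destruct (Hc _ _ _ H H2). auto.
  - tauto.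
  - tauto.
  - tauto.
  - rewrite !Forall_app. tauto.
Qed.

End S.

Theorem proposition4p1 (S : Type) (C : Category S) :
  conical C <-> Umon_conical C.
Proof.
  split.
  - intros Hc u v H.
    apply (@inv_id S C Hc) in H. destruct H as [_ H].
    specialize (H (Forall_nil _)). apply Forall_app in H as [H1 H2].
    split; apply all_id_eq; auto.
  - intros Hu x y z Hxy Hz.
    assert (E : umon_eq C ([x] ++ [y]) []).
    { eapply ue_trans. apply ue_mul; eauto. apply ue_id; auto. }
    destruct (Hu _ _ E) as [Ex Ey].
    assert (Hnf : forall a, umon_eq C [a] [] -> isId C a).
    { intros a Ea. pose proof (@act_eq S C _ _ Ea [] I) as Ha.
      simpl in Ha. unfold ins in Ha. destruct (isIdb _ _ a); auto. discriminate. }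
    auto.
Qed.
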